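(* $(M_0,\mathrm{id})$ with the path metric is an initial object in $\mathsf{SquaMS}$.
   Context: Let $M_0=\{(r,s)\in[0,1]^2: r\in\{0,1\}\text{ or } s\in\{0,1\}\}$ be the boundary of the unit square. Its path metric: two points on the same side have distance equal to their distance in $[0,1]$; points on adjacent sides sharing a corner $c$ have distance $d(x,c)+d(c,y)$; points on opposite sides have distance $\min(d(x,c_1)+1+d(c_2,y))$ over the two remaining sides with endpoints $c_1$ on the side of $x$ and $c_2$ on the side of $y$. A square metric space is a pair $(X,S_X)$ with $X$ a metric space with all distances at most $2$ and $S_X\colon M_0\to X$ injective such that (sq1) for $i\in\{0,1\}$, $r,s\in[0,1]$: $d_X(S_X(i,r),S_X(i,s))=|s-r|$ and $d_X(S_X(r,i),S_X(s,i))=|s-r|$; (sq2) $d_X(S_X(r,s),S_X(t,u))\ge|r-t|+|s-u|$. $\mathsf{SquaMS}$ has these as objects and short maps $f\colon X\to Y$ with $f\circ S_X=S_Y$ as morphisms. *)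

(* Defs.v *)
From Stdlib Require Import Reals Bool.
Open Scope R_scope.

Definition inM0 (p : R * R) : Prop :=
  0 <= fst p <= 1 /\ 0 <= snd p <= 1 /\
  (fst p = 0 \/ fst p = 1 \/ snd p = 0 \/ snd p = 1).

Definition M0 : Type := { p : R * R | inM0 p }.

Definition Reqb (a b : R) : bool := if Req_EM_T a b then true else false.

(** Path metric on the boundary of the square, following the case
    description: opposite vertical sides (r=0 / r=1), opposite horizontal
    sides (s=0 / s=1): minimum over the two routes through the remaining
    sides; otherwise (same or adjacent sides) the distance through the
    common side / common corner, which is |r-t|+|s-u|. *)
Definition pathd (x y : R * R) : R :=
  let r := fst x in let s := snd x in let t := fst y in let u := snd y in
  if (Reqb r 0 && Reqb t 1) then Rmin (s + 1 + u) ((1 - s) + 1 + (1 - u))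
  else if (Reqb r 1 && Reqb t 0) then Rmin (s + 1 + u) ((1 - s) + 1 + (1 - u))
  else if (Reqb s 0 && Reqb u 1) then Rmin (r + 1 + t) ((1 - r) + 1 + (1 - t))
  else if (Reqb s 1 && Reqb u 0) then Rmin (r + 1 + t) ((1 - r) + 1 + (1 - t))
  else Rabs (r - t) + Rabs (s - u).

Definition M0dist (p q : M0) : R := pathd (proj1_sig p) (proj1_sig q).

Definition is_metric {T : Type} (d : T -> T -> R) : Prop :=
  (forall x y, d x y = 0 <-> x = y) /\
  (forall x y, d x y = d y x) /\
  (forall x y z, d x z <= d x y + d y z).

Definition is_square_metric {T : Type} (d : T -> T -> R) (S : M0 -> T) : Prop :=
  is_metric d /\
  (forall x y, d x y <= 2) /\
  (forall p q, S p = S q -> p = q) /\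
  (forall p q : M0, fst (proj1_sig p) = fst (proj1_sig q) ->
     (fst (proj1_sig p) = 0 \/ fst (proj1_sig p) = 1) ->
     d (S p) (S q) = Rabs (snd (proj1_sig q) - snd (proj1_sig p))) /\
  (forall p q : M0, snd (proj1_sig p) = snd (proj1_sig q) ->
     (snd (proj1_sig p) = 0 \/ snd (proj1_sig p) = 1) ->
     d (S p) (S q) = Rabs (fst (proj1_sig q) - fst (proj1_sig p))) /\
  (forall p q : M0,
     d (S p) (S q) >= Rabs (fst (proj1_sig p) - fst (proj1_sig q))
                      + Rabs (snd (proj1_sig p) - snd (proj1_sig q))).

Record SquaMS := {
  sq_carrier :> Type;
  sq_dist : sq_carrier -> sq_carrier -> R;
  sq_S : M0 -> sq_carrier;
  sq_ax : is_square_metric sq_dist sq_S }.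

Definition short {T U : Type} (dT : T -> T -> R) (dU : U -> U -> R) (f : T -> U) : Prop :=
  forall x y, dU (f x) (f y) <= dT x y.

Definition SquaMS_hom {T : Type} (dT : T -> T -> R) (ST : M0 -> T) (Y : SquaMS)
  (f : T -> Y) : Prop :=
  short dT (sq_dist Y) f /\ (forall p, f (ST p) = sq_S Y p).

(* Main.v *)
Require Import Defs.
From Stdlib Require Import Reals Lra Bool FunctionalExtensionality ProofIrrelevance.
Open Scope R_scope.

Definition theta (p : R*R) : R :=
  if Reqb (snd p) 0 then fst p else if Reqb (fst p) 1 then 1 + snd p
  else if Reqb (snd p) 1 then 3 - fst p else 4 - snd p.
Definition cd (a b : R) := Rmin (Rabs (a - b)) (4 - Rabs (a - b)).

Ltac crunch :=
  unfold Reqb, Rmin, Rmax in *;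
  repeat match goal with |- context [Req_EM_T ?a ?b] => destruct (Req_EM_T a b) end;
  simpl in *;
  try (exfalso; congruence);
  repeat match goal with |- context [Rabs ?a] => destruct (Rcase_abs a) ;
     [rewrite (Rabs_left a) by assumption | rewrite (Rabs_right a) by assumption] end;
  repeat match goal with |- context [Rle_dec ?a ?b] => destruct (Rle_dec a b) end;
  try lra.

Ltac rabs_case x := let h := fresh "h" in destruct (Rcase_abs x) as [h|h];
  [rewrite (Rabs_left x h) | rewrite (Rabs_right x h)].

Lemma pathd_cd r s t u : inM0 (r,s) -> inM0 (t,u) ->
  pathd (r,s) (t,u) = cd (theta (r,s)) (theta (t,u)).
Proof.
  unfold inM0, pathd, theta, cd; simpl.
  intros [[? ?] [[? ?] Hs1]] [[? ?] [[? ?] Hs2]].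
  destruct Hs1 as [ -> | [ -> | [ -> | -> ] ] ]; destruct Hs2 as [ -> | [ -> | [ -> | -> ] ] ]; crunch.
Qed.

Lemma theta_range r s : inM0 (r,s) -> 0 <= theta (r,s) <= 4.
Proof.
  unfold inM0, theta; simpl. intros [[? ?] [[? ?] _]]. crunch.
Qed.

Lemma cd_tri a b c : 0 <= a <= 4 -> 0 <= b <= 4 -> 0 <= c <= 4 ->
  cd a c <= cd a b + cd b c.
Proof. intros. unfold cd, Rmin.
  rabs_case (a - c); rabs_case (a - b); rabs_case (b - c);
  repeat match goal with |- context [Rle_dec ?a ?b] => destruct (Rle_dec a b) end; lra.
Qed.

Lemma cd_sym a b : cd a b = cd b a.
Proof. unfold cd. rewrite Rabs_minus_sym. reflexivity. Qed.

Lemma cd_le2 a b : cd a b <= 2.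
Proof. unfold cd, Rmin. destruct (Rle_dec _ _); lra. Qed.

Lemma cd_self a : cd a a = 0.
Proof. unfold cd. rewrite Rminus_diag, Rabs_R0. unfold Rmin. destruct (Rle_dec _ _); lra. Qed.

Lemma pathd_sq2 r s t u : inM0 (r,s) -> inM0 (t,u) ->
  pathd (r,s) (t,u) >= Rabs (r - t) + Rabs (s - u).
Proof.
  unfold inM0, pathd; simpl.
  intros [[? ?] [[? ?] Hs1]] [[? ?] [[? ?] Hs2]].
  destruct Hs1 as [ -> | [ -> | [ -> | -> ] ] ]; destruct Hs2 as [ -> | [ -> | [ -> | -> ] ] ]; crunch.
Qed.

Lemma pathd_sq1a r s t u : inM0 (r,s) -> inM0 (t,u) -> r = t -> (r = 0 \/ r = 1) ->
  pathd (r,s) (t,u) = Rabs (u - s).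
Proof.
  unfold inM0, pathd; simpl.
  intros [[? ?] [[? ?] Hs1]] [[? ?] [[? ?] Hs2]] <- [ -> | -> ]; crunch.
Qed.

Lemma pathd_sq1b r s t u : inM0 (r,s) -> inM0 (t,u) -> s = u -> (s = 0 \/ s = 1) ->
  pathd (r,s) (t,u) = Rabs (t - r).
Proof.
  unfold inM0, pathd; simpl.
  intros [[? ?] [[? ?] Hs1]] [[? ?] [[? ?] Hs2]] <- [ -> | -> ]; crunch.
Qed.

Lemma part1 : is_square_metric M0dist (fun p : M0 => p).
Proof.
  unfold is_square_metric, is_metric, M0dist.
  repeat split.
  - destruct x as [[r s] Hp], y as [[t u] Hq]; simpl. intro H.
    pose proof (pathd_sq2 r s t u Hp Hq) as H2.
    pose proof (Rabs_pos (r - t)). pose proof (Rabs_pos (s - u)).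
    assert (Rabs (r - t) = 0) by lra. assert (Rabs (s - u) = 0) by lra.
    assert (r = t). { destruct (Rcase_abs (r - t)) as [h|h]; [rewrite Rabs_left in H3 by lra | rewrite Rabs_right in H3 by lra]; lra. }
    assert (s = u). { destruct (Rcase_abs (s - u)) as [h|h]; [rewrite Rabs_left in H4 by lra | rewrite Rabs_right in H4 by lra]; lra. }
    subst.
    f_equal. apply proof_irrelevance.
  - intro E; subst y. destruct x as [[t u] Hq]; simpl. rewrite pathd_cd by assumption. apply cd_self.
  - intros [[r s] Hp] [[t u] Hq]; simpl. rewrite !pathd_cd by assumption. apply cd_sym.
  - intros [[r s] Hp] [[t u] Hq] [[v w] Hw]; simpl. rewrite !pathd_cd by assumption.
    apply cd_tri; eapply theta_range; eassumption.
  - intros [[r s] Hp] [[t u] Hq]; simpl. rewrite !pathd_cd by assumption. apply cd_le2.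
  - auto.
  - intros [[r s] Hp] [[t u] Hq]; simpl. apply pathd_sq1a; assumption.
  - intros [[r s] Hp] [[t u] Hq]; simpl. apply pathd_sq1b; assumption.
  - intros [[r s] Hp] [[t u] Hq]; simpl. apply pathd_sq2; assumption.
Qed.

Lemma P00 : inM0 (0,0). Proof. unfold inM0; simpl; lra. Qed.
Lemma P01 : inM0 (0,1). Proof. unfold inM0; simpl; lra. Qed.
Lemma P10 : inM0 (1,0). Proof. unfold inM0; simpl; lra. Qed.
Lemma P11 : inM0 (1,1). Proof. unfold inM0; simpl; lra. Qed.
Definition c00 : M0 := exist inM0 (0,0) P00.
Definition c01 : M0 := exist inM0 (0,1) P01.
Definition c10 : M0 := exist inM0 (1,0) P10.
Definition c11 : M0 := exist inM0 (1,1) P11.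

Ltac pose_sq1 H a b p q := try (let X := fresh "X" in pose proof (H a b) as X; try unfold p in X; try unfold q in X; unfold c00, c01, c10, c11 in X; cbn [fst snd proj1_sig] in X;
  specialize (X ltac:(lra)); specialize (X ltac:(first [left; lra | right; lra]));
  (first [rewrite Rabs_right in X by lra | rewrite Rabs_left1 in X by lra | idtac])).

Ltac rabs_case_all x := let h := fresh "h" in destruct (Rcase_abs x) as [h|h];
  [rewrite (Rabs_left x h) in * | rewrite (Rabs_right x h) in *].

Lemma short_S (Y : SquaMS) (p q : M0) : sq_dist Y (sq_S Y p) (sq_S Y q) <= M0dist p q.
Proof.
  destruct (sq_ax Y) as [[Hd0 [Hsym Htri]] [Hle2 [Hinj [Hs1 [Hs2 Hsq2]]]]].
  destruct p as [[r s] Hp], q as [[t u] Hq].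
  set (p := exist _ (r,s) Hp); set (q := exist _ (t,u) Hq).
  pose proof Hp as Hp'; pose proof Hq as Hq'.
  unfold inM0 in Hp', Hq'; simpl in Hp', Hq'.
  destruct Hp' as [[? ?] [[? ?] Hs1']]; destruct Hq' as [[? ?] [[? ?] Hs2']].
  destruct Hs1' as [ -> | [ -> | [ -> | -> ] ] ]; destruct Hs2' as [ -> | [ -> | [ -> | -> ] ] ].
  all: clear Hd0 Hle2 Hinj Hsq2.
  all: pose_sq1 Hs1 p q p q; pose_sq1 Hs2 p q p q.
  all: pose_sq1 Hs1 p c00 p q; pose_sq1 Hs2 p c00 p q.
  all: pose_sq1 Hs1 p c01 p q; pose_sq1 Hs2 p c01 p q.
  all: pose_sq1 Hs1 p c10 p q; pose_sq1 Hs2 p c10 p q.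
  all: pose_sq1 Hs1 p c11 p q; pose_sq1 Hs2 p c11 p q.
  all: pose_sq1 Hs1 q p p q; pose_sq1 Hs2 q p p q.
  all: pose_sq1 Hs1 q c00 p q; pose_sq1 Hs2 q c00 p q.
  all: pose_sq1 Hs1 q c01 p q; pose_sq1 Hs2 q c01 p q.
  all: pose_sq1 Hs1 q c10 p q; pose_sq1 Hs2 q c10 p q.
  all: pose_sq1 Hs1 q c11 p q; pose_sq1 Hs2 q c11 p q.
  all: pose_sq1 Hs1 c00 p p q; pose_sq1 Hs2 c00 p p q.
  all: pose_sq1 Hs1 c00 q p q; pose_sq1 Hs2 c00 q p q.
  all: pose_sq1 Hs1 c00 c01 p q; pose_sq1 Hs2 c00 c01 p q.
  all: pose_sq1 Hs1 c00 c10 p q; pose_sq1 Hs2 c00 c10 p q.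
  all: pose_sq1 Hs1 c00 c11 p q; pose_sq1 Hs2 c00 c11 p q.
  all: pose_sq1 Hs1 c01 p p q; pose_sq1 Hs2 c01 p p q.
  all: pose_sq1 Hs1 c01 q p q; pose_sq1 Hs2 c01 q p q.
  all: pose_sq1 Hs1 c01 c00 p q; pose_sq1 Hs2 c01 c00 p q.
  all: pose_sq1 Hs1 c01 c10 p q; pose_sq1 Hs2 c01 c10 p q.
  all: pose_sq1 Hs1 c01 c11 p q; pose_sq1 Hs2 c01 c11 p q.
  all: pose_sq1 Hs1 c10 p p q; pose_sq1 Hs2 c10 p p q.
  all: pose_sq1 Hs1 c10 q p q; pose_sq1 Hs2 c10 q p q.
  all: pose_sq1 Hs1 c10 c00 p q; pose_sq1 Hs2 c10 c00 p q.
  all: pose_sq1 Hs1 c10 c01 p q; pose_sq1 Hs2 c10 c01 p q.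
  all: pose_sq1 Hs1 c10 c11 p q; pose_sq1 Hs2 c10 c11 p q.
  all: pose_sq1 Hs1 c11 p p q; pose_sq1 Hs2 c11 p p q.
  all: pose_sq1 Hs1 c11 q p q; pose_sq1 Hs2 c11 q p q.
  all: pose_sq1 Hs1 c11 c00 p q; pose_sq1 Hs2 c11 c00 p q.
  all: pose_sq1 Hs1 c11 c01 p q; pose_sq1 Hs2 c11 c01 p q.
  all: pose_sq1 Hs1 c11 c10 p q; pose_sq1 Hs2 c11 c10 p q.
  all: pose proof (Htri (sq_S Y p) (sq_S Y c00) (sq_S Y q)).
  all: pose proof (Htri (sq_S Y c00) (sq_S Y c01) (sq_S Y q)).
  all: pose proof (Htri (sq_S Y c00) (sq_S Y c10) (sq_S Y q)).
  all: pose proof (Htri (sq_S Y c00) (sq_S Y c11) (sq_S Y q)).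
  all: pose proof (Htri (sq_S Y p) (sq_S Y c01) (sq_S Y q)).
  all: pose proof (Htri (sq_S Y c01) (sq_S Y c00) (sq_S Y q)).
  all: pose proof (Htri (sq_S Y c01) (sq_S Y c10) (sq_S Y q)).
  all: pose proof (Htri (sq_S Y c01) (sq_S Y c11) (sq_S Y q)).
  all: pose proof (Htri (sq_S Y p) (sq_S Y c10) (sq_S Y q)).
  all: pose proof (Htri (sq_S Y c10) (sq_S Y c00) (sq_S Y q)).
  all: pose proof (Htri (sq_S Y c10) (sq_S Y c01) (sq_S Y q)).
  all: pose proof (Htri (sq_S Y c10) (sq_S Y c11) (sq_S Y q)).
  all: pose proof (Htri (sq_S Y p) (sq_S Y c11) (sq_S Y q)).
  all: pose proof (Htri (sq_S Y c11) (sq_S Y c00) (sq_S Y q)).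
  all: pose proof (Htri (sq_S Y c11) (sq_S Y c01) (sq_S Y q)).
  all: pose proof (Htri (sq_S Y c11) (sq_S Y c10) (sq_S Y q)).
  all: clear Htri Hs1 Hs2 Hsym.
  all: unfold p, q, c00, c01, c10, c11 in *.
  all: unfold M0dist; cbn [proj1_sig]; unfold pathd; cbn [fst snd].
  all: repeat match goal with H : context [Rabs ?x] |- _ => rabs_case_all x end.
  all: crunch.
Qed.

Theorem mainTheorem18 :
  is_square_metric M0dist (fun p : M0 => p) /\
  forall Y : SquaMS,
    exists! f : M0 -> Y, SquaMS_hom M0dist (fun p : M0 => p) Y f.
Proof.
  split.
  - exact part1.
  - intro Y. exists (sq_S Y). split.
    + split.
      * intros x y. apply short_S.
      * intro p. reflexivity.
    + intros g [_ Hg]. apply functional_extensionality. intro p. symmetry. apply Hg.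
Qed.
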